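(* Consider the two first-order partial differential equations, depending on a small parameter $\epsilon>0$, for positive unknowns $v(x,s)$ and $u(x,s)$: $$v_s+\frac{\epsilon}{2}vv_x-\frac12 v^2=0,\qquad 2u_s+\frac{\epsilon}{2}u(u_s+u_x)=0 .$$ Then both equations belong to $\mathbf{PDE}_2^{\infty}$ and are approximable in the class $(M,c,L,k,D)=(20,2,1,2,1)$, and they are mutually related in $\sim_{\infty}^{e^e}$ in the class $(M,c,D,L;\alpha)=(40,4,1,2;1)$.
   Context: Approximation by discrete dynamics. Let $f=k/h$ be a rational function of $n$ variables ($k,h$ polynomials). An evolutional discrete dynamics is a recursion $z_{N+1}^{t+1}=f(z_{N-l_0}^{t+1},\dots,z_N^{t+1},z_{N-l_1}^t,\dots,z_{N+k_1}^t,\dots,z_{N-l_{d+1}}^{t-d},\dots,z_{N+k_{d+1}}^{t-d})$ with integers $l_i,k_j\ge 0$, $d\ge0$; it is consistent if $k_1,\dots,k_{d+1}\le 1$. Approximation data consist of this choice of arguments together with integers $(m,p,q)$. One substitutes $z_N^t=\epsilon^m u(x,s)$, $x=\epsilon^pN$, $s=\epsilon^q t$ for a positive $C^{\alpha+1}$ function $u$, expands each shifted value $u(x+i\epsilon^p,s+j\epsilon^q)$ by Taylor's formula up to order $\alpha$ with remainder given by the $(\alpha+1)$-th order derivatives at intermediate points $\xi_{ij}$, writes $z_{N+1}^{t+1}-f(\cdots)$ as a fraction with denominator $h(\epsilon^m u(x-l_0\epsilon^p,s+\epsilon^q),\dots)$, and splits the numerator as $\epsilon^m P(\epsilon,u,u_x,u_s,\dots,u_{\alpha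 s})+\epsilon^{m+1}Q(\dots)$, where $P$ collects the monomials containing only derivatives of order $\le\alpha$ and every monomial of $Q$ contains an $(\alpha+1)$-th order derivative at an intermediate point. Put $\mathbf F=P/h$, $\mathbf F^1=Q/h$, so $z_{N+1}^{t+1}-f(\cdots)=\epsilon^m\mathbf F+\epsilon^{m+1}\mathbf F^1$. A PDE $P(\epsilon,u,\dots,u_{\alpha s})=0$ of order $\alpha$ is in $\mathbf{PDE}_2^{\infty}$ if it arises this way with $h>0$ and there is a constant $C\ge0$ with $|\mathbf F^1|\le C(|u_{(\alpha+1)x}(\xi_{\alpha+1,0})|+\dots+|u_{(\alpha+1)s}(\xi_{0,\alpha+1})|)$ pointwise; it is in $\mathbf{PDE}_2^{fin}$ if moreover the dynamics is consistent. From the data set $l=\max(l_0,\dots,l_{d+1})$, $L=\max(l,d)$, $D=\max(p,q)$, $k=\max(k_1,\dots,k_{d+1})$. Tropical constants. A relatively elementary function is $f_t(\bar z)=\sum_{k=1}^m t^{\alpha_k}\bar z^{\bar a_k}/\sum_{k=1}^{l'} t^{\beta_k}\bar z^{\bar b_k}$ ($\bar z\in\mathbb R^n_{>0}$, $\bar a_k,\bar b_k\in\mathbb Z^n$, $\alpha_k,\beta_k\in\mathbb R$); its $(\max,+)$-function is $\varphi(\bar x)=\max_k(\alpha_k+\bar a_k\cdot\bar x)-\max_k(\beta_k+\bar b_k\cdot\bar x)$. $M_f=ml'$ is the number of components and $c_f\ge1$ the Lipschitz constant of $\varphi$. A PDE in $\mathbf{PDE}_2^*$ is approximable in the class $(M,c,L,k,D)$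 if it is induced from some such dynamics with relatively elementary $f$ and approximation data whose constants $M_f,c_f,L,k,D$ are respectively $\le M,c,L,k,D$. Relatedness. For positive $u,v:(0,A_0)\times[0,T_0)\to(0,\infty)$, $A_0,T_0\in(0,\infty]$, and $0<\epsilon<1$, the initial rate is $[u:v]_\epsilon=\sup\max(u/v,v/u)$ over $(x,s)\in(0,A_0)\times[0,\epsilon]\cup(0,\epsilon]\times[0,T_0)$. For $u\in C^{\alpha+1}$, $\|u\|_{\alpha+1}$ is the maximum over all $(\alpha+1)$-fold partial derivatives (each in $\partial_x$ or $\partial_s$) of their sup norms on the domain, and $K_{\alpha+1}(u)=\|u\|_{\alpha+1}/\inf u$. For $*\in\{fin,\infty\}$, solutions are taken on domains $(0,A_0)\times[0,T_0)$ with $A_0,T_0\in(0,\infty]$ ($A_0=\infty$ if $*=\infty$). Two PDEs $P,Q$ of order $\alpha$ are related in $\sim_*^{e^e}$ in the class $(M,c,D,L;\alpha)$ ($M,c,D,L\ge1$) if there are constants $C,C'$ such that for every such domain, every $\epsilon$ and every pair of positive $C^{\alpha+1}$ solutions $u$ of $P$ and $v$ of $Q$ (with parameter $\epsilon$), if $0<L\epsilon\le\min(\frac{1}{CK},A_0,T_0,C')$ with $K=\max(K_{\alpha+1}(u),K_{\alpha+1}(v))$, then for all $(x,s)$ in the domain $\max(u/v,v/u)(x,s)\le M^{c^{\epsilon^{-D}(x+s+1)}}([u:v]_{L\epsilon})^{c^{\epsilon^{-D}(x+s+1)}}$. *)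

(* Defs.v *)
(* concrete reals R. All definitions are specialised to
   first-order PDEs (alpha = 1), which is the only case the statement uses. *)
From Stdlib Require Import Reals Lra ZArith List.
Import ListNotations.
Open Scope R_scope.

Definition poly := list (R * list nat).
Fixpoint mon (e : list nat) (z : list R) : R :=
  match e, z with
  | e0 :: e', z0 :: z' => z0 ^ e0 * mon e' z'
  | _, _ => 1
  end.
Definition peval (P : poly) (z : list R) : R :=
  fold_right (fun c acc => fst c * mon (snd c) z + acc) 0 P.

(* z_{N+1}^{t+1} = f(z_{N-l0}^{t+1},..,z_N^{t+1}, z_{N-l_1}^t,..,z_{N+k_1}^t, ...,
                     z_{N-l_{d+1}}^{t-d},..,z_{N+k_{d+1}}^{t-d}),  f = k/h;
   only the values ls i, ks i for 1 <= i <= d+1 matter. *)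
Record dyn := Dyn {
  dl0 : nat; dd : nat; dls : nat -> nat; dks : nat -> nat;
  dk : poly; dh : poly;
  dm : Z; dp : Z; dq : Z
}.

(* the arguments of f, as (space shift, time shift) relative to (N,t) *)
Definition stencil (D : dyn) : list (Z * Z) :=
  map (fun a => (- Z.of_nat (dl0 D - a), 1)%Z) (seq 0%nat (S (dl0 D))) ++
  flat_map (fun i => map (fun b => (Z.of_nat b - Z.of_nat (dls D i), 1 - Z.of_nat i)%Z)
                         (seq 0%nat (dls D i + dks D i + 1)%nat))
           (seq 1%nat (S (dd D))).
Definition nargs (D : dyn) : nat := length (stencil D).

Definition lmax (D : dyn) : nat :=
  fold_right Nat.max (dl0 D) (map (dls D) (seq 1%nat (S (dd D)))).
Definition Lconst (D : dyn) : nat := Nat.max (lmax D) (dd D).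
Definition kconst (D : dyn) : nat := fold_right Nat.max 0%nat (map (dks D) (seq 1%nat (S (dd D)))).
Definition Dconst (D : dyn) : Z := Z.max (dp D) (dq D).

(* first-order Taylor polynomial of u(x + i eps^p, s + j eps^q) *)
Definition tay (D : dyn) (eps u0 ux us : R) (ij : Z * Z) : R :=
  u0 + IZR (fst ij) * powerRZ eps (dp D) * ux + IZR (snd ij) * powerRZ eps (dq D) * us.

(* the induced PDE P(eps,u,u_x,u_s): the part of the numerator
   z_{N+1}^{t+1} h(..) - k(..) made of monomials containing only derivatives
   of order <= 1, divided by eps^m *)
Definition induced_P (D : dyn) (eps u0 ux us : R) : R :=
  let em := powerRZ eps (dm D) in
  let zs := map (fun ij => em * tay D eps u0 ux us ij) (stencil D) in
  (em * tay D eps u0 ux us (1, 1)%Z * peval (dh D) zs - peval (dk D) zs) / em.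

Definition shx (D : dyn) (eps : R) (ij : Z * Z) : R := IZR (fst ij) * powerRZ eps (dp D).
Definition shs (D : dyn) (eps : R) (ij : Z * Z) : R := IZR (snd ij) * powerRZ eps (dq D).

(* F^1 = Q / h, where numerator = eps^m P + eps^(m+1) Q *)
Definition F1 (D : dyn) (eps : R) (u ux us : R -> R -> R) (x s : R) : R :=
  let em := powerRZ eps (dm D) in
  let zs := map (fun ij => em * u (x + shx D eps ij) (s + shs D eps ij)) (stencil D) in
  (em * u (x + shx D eps (1, 1)%Z) (s + shs D eps (1, 1)%Z) * peval (dh D) zs
     - peval (dk D) zs - em * induced_P D eps (u x s) (ux x s) (us x s))
  / (powerRZ eps (dm D + 1) * peval (dh D) zs).

Definition pderx (Dom : R -> R -> Prop) (f g : R -> R -> R) : Prop :=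
  forall x s, Dom x s -> forall e, 0 < e -> exists del, 0 < del /\
    forall h, h <> 0 -> Rabs h < del -> Dom (x + h) s ->
      Rabs ((f (x + h) s - f x s) / h - g x s) < e.
Definition pders (Dom : R -> R -> Prop) (f g : R -> R -> R) : Prop :=
  forall x s, Dom x s -> forall e, 0 < e -> exists del, 0 < del /\
    forall h, h <> 0 -> Rabs h < del -> Dom x (s + h) ->
      Rabs ((f x (s + h) - f x s) / h - g x s) < e.
Definition cont_on (Dom : R -> R -> Prop) (f : R -> R -> R) : Prop :=
  forall x s, Dom x s -> forall e, 0 < e -> exists del, 0 < del /\
    forall y r, Dom y r -> Rabs (y - x) < del -> Rabs (r - s) < del ->
      Rabs (f y r - f x s) < e.
Definition C2_on (Dom : R -> R -> Prop) (u ux us uxx uxs usx uss : R -> R -> R) : Prop :=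
  pderx Dom u ux /\ pders Dom u us /\
  pderx Dom ux uxx /\ pders Dom ux uxs /\ pderx Dom us usx /\ pders Dom us uss /\
  cont_on Dom u /\ cont_on Dom ux /\ cont_on Dom us /\
  cont_on Dom uxx /\ cont_on Dom uxs /\ cont_on Dom usx /\ cont_on Dom uss.

Definition whole (x s : R) : Prop := True.

Definition sum2 (D : dyn) (eps : R) (uxx uxs usx uss : R -> R -> R) (x s : R)
  (th : Z * Z -> R) : R :=
  fold_right (fun ij acc =>
     let xi := x + th ij * shx D eps ij in let si := s + th ij * shs D eps ij in
     Rabs (uxx xi si) + Rabs (uxs xi si) + Rabs (usx xi si) + Rabs (uss xi si) + acc)
   0 ((1, 1)%Z :: stencil D).

(* A first-order PDE is a function G eps u u_x u_s; the equation is G = 0. *)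
Definition pde1 := R -> R -> R -> R -> R.

Definition PDE2inf_data (D : dyn) (G : pde1) : Prop :=
  (forall z, length z = nargs D -> Forall (fun y => 0 < y) z -> 0 < peval (dh D) z) /\
  (exists lam : R -> R, forall eps, 0 < eps < 1 -> lam eps <> 0 /\
     forall u0 ux us, 0 < u0 -> induced_P D eps u0 ux us = lam eps * G eps u0 ux us) /\
  (exists C, 0 <= C /\
     forall eps, 0 < eps < 1 ->
     forall u ux us uxx uxs usx uss,
       C2_on whole u ux us uxx uxs usx uss -> (forall x s, 0 < u x s) ->
     forall x s (th : Z * Z -> R),
       (forall ij, In ij ((1, 1)%Z :: stencil D) ->
          0 <= th ij <= 1 /\
          let a := shx D eps ij in let b := shs D eps ij in
          let xi := x + th ij * a in let si := s + th ij * b in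
          u (x + a) (s + b) = u x s + a * ux x s + b * us x s
             + / 2 * (a ^ 2 * uxx xi si + a * b * (uxs xi si + usx xi si) + b ^ 2 * uss xi si)) ->
       Rabs (F1 D eps u ux us x s) <= C * sum2 D eps uxx uxs usx uss x s th).

Definition PDE2inf (G : pde1) : Prop := exists D, PDE2inf_data D G.

Fixpoint lmon (a : list Z) (z : list R) : R :=
  match a, z with
  | a0 :: a', z0 :: z' => powerRZ z0 a0 * lmon a' z'
  | _, _ => 1
  end.
Definition relsum (t : R) (T : list (R * list Z)) (z : list R) : R :=
  fold_right (fun c acc => Rpower t (fst c) * lmon (snd c) z + acc) 0 T.
Fixpoint dotZ (a : list Z) (x : list R) : R :=
  match a, x with
  | a0 :: a', x0 :: x' => IZR a0 * x0 + dotZ a' x'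
  | _, _ => 0
  end.
Definition tropmax (T : list (R * list Z)) (x : list R) : R :=
  match T with
  | [] => 0
  | c :: T' => fold_right (fun c' acc => Rmax (fst c' + dotZ (snd c') x) acc)
                          (fst c + dotZ (snd c) x) T'
  end.
Definition phi (num den : list (R * list Z)) (x : list R) : R :=
  tropmax num x - tropmax den x.
Definition supdist (x y : list R) : R :=
  fold_right Rmax 0 (map (fun p => Rabs (fst p - snd p)) (combine x y)).

Definition approx_data (D : dyn) (M c : R) (L0 k0 D0 : nat) : Prop :=
  exists (t : R) (num den : list (R * list Z)),
    0 < t /\ num <> [] /\ den <> [] /\
    Forall (fun cc => length (snd cc) = nargs D) num /\
    Forall (fun cc => length (snd cc) = nargs D) den /\
    (forall z, length z = nargs D -> Forall (fun y => 0 < y) z ->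
       peval (dk D) z / peval (dh D) z = relsum t num z / relsum t den z) /\
    INR (length num * length den) <= M /\
    (forall x y, length x = nargs D -> length y = nargs D ->
       Rabs (phi num den x - phi num den y) <= c * supdist x y) /\
    (Lconst D <= L0)%nat /\ (kconst D <= k0)%nat /\ (Dconst D <= Z.of_nat D0)%Z.

Definition approximable (G : pde1) (M c : R) (L0 k0 D0 : nat) : Prop :=
  exists D, PDE2inf_data D G /\ approx_data D M c L0 k0 D0.

(* domain (0,infty) x [0,T0), T0 in (0,infty] (None = infinity) *)
Definition dom (T0 : option R) (x s : R) : Prop :=
  0 < x /\ 0 <= s /\ match T0 with Some T => s < T | None => True end.
Definition T0_ok (T0 : option R) : Prop :=
  match T0 with Some T => 0 < T | None => True end.
Definition le_T0 (a : R) (T0 : option R) : Prop :=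
  match T0 with Some T => a <= T | None => True end.
Definition solves (G : pde1) (eps : R) (Dom : R -> R -> Prop) (u ux us : R -> R -> R) : Prop :=
  forall x s, Dom x s -> G eps (u x s) (ux x s) (us x s) = 0.
Definition ratio (u v : R -> R -> R) (x s : R) : R := Rmax (u x s / v x s) (v x s / u x s).
Definition max2nd (uxx uxs usx uss : R -> R -> R) (x s : R) : R :=
  Rmax (Rmax (Rabs (uxx x s)) (Rabs (uxs x s))) (Rmax (Rabs (usx x s)) (Rabs (uss x s))).

Definition related_inf (P Q : pde1) (M c : R) (D0 L0 : nat) : Prop :=
  exists C C', 0 < C /\ 0 < C' /\
  forall T0, T0_ok T0 ->
  forall eps, 0 < eps < 1 ->
  forall u ux us uxx uxs usx uss v vx vs vxx vxs vsx vss,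
    C2_on (dom T0) u ux us uxx uxs usx uss ->
    C2_on (dom T0) v vx vs vxx vxs vsx vss ->
    (forall x s, dom T0 x s -> 0 < u x s) ->
    (forall x s, dom T0 x s -> 0 < v x s) ->
    solves P eps (dom T0) u ux us -> solves Q eps (dom T0) v vx vs ->
    (* 0 < L eps <= min(1/(C K), A0 = infty, T0, C') *)
    INR L0 * eps <= C' -> le_T0 (INR L0 * eps) T0 ->
    (forall x s y r, dom T0 x s -> dom T0 y r ->
        C * (INR L0 * eps) * max2nd uxx uxs usx uss x s <= u y r /\
        C * (INR L0 * eps) * max2nd vxx vxs vsx vss x s <= v y r) ->
    (* R0 is any upper bound of the initial rate region, i.e. R0 >= [u:v]_{L eps} *)
    forall R0,
    (forall x s, dom T0 x s -> (s <= INR L0 * eps \/ x <= INR L0 * eps) -> ratio u v x s <= R0) ->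
    forall x s, dom T0 x s ->
      ratio u v x s <=
        Rpower M (Rpower c ((x + s + 1) / eps ^ D0)) *
        Rpower R0 (Rpower c ((x + s + 1) / eps ^ D0)).

Definition Gv : pde1 := fun eps v vx vs => vs + eps / 2 * v * vx - / 2 * v ^ 2.
Definition Gu : pde1 := fun eps u ux us => 2 * us + eps / 2 * u * (us + ux).

(* Main.v *)
Require Import Defs.
From Stdlib Require Import Reals Lra List ZArith.
Import ListNotations.
Open Scope R_scope.

Definition Dv : dyn := Dyn 0 0 (fun _ => 0%nat) (fun _ => 1%nat)
  [(1,[0;0;1]%nat); (/2,[1;1;0]%nat); (/2,[0;2;0]%nat)]
  [(1,[0;0;0]%nat); (/2,[0;1;0]%nat)] 1 1 1.
Definition Du : dyn := Dyn 0 0 (fun _ => 0%nat) (fun _ => 1%nat)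
  [(2,[0;0;1]%nat); (/2,[0;2;0]%nat)]
  [(2,[0;0;0]%nat); (/2,[0;1;0]%nat)] 1 1 1.

Lemma stencil_Dv : stencil Dv = [(0,1);(0,0);(1,0)]%Z.
Proof. reflexivity. Qed.
Lemma stencil_Du : stencil Du = [(0,1);(0,0);(1,0)]%Z.
Proof. reflexivity. Qed.

Lemma pw1 e : powerRZ e 1 = e.
Proof. simpl. ring. Qed.

Lemma indP_v eps u0 ux us : eps <> 0 -> induced_P Dv eps u0 ux us = eps * Gv eps u0 ux us.
Proof.
  intro He. unfold induced_P. rewrite stencil_Dv. unfold tay. simpl dm; simpl dp; simpl dq.
  rewrite pw1. unfold peval, mon, Gv; simpl. field. auto.
Qed.
Lemma indP_u eps u0 ux us : eps <> 0 -> induced_P Du eps u0 ux us = eps * Gu eps u0 ux us.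
Proof.
  intro He. unfold induced_P. rewrite stencil_Du. unfold tay. simpl dm; simpl dp; simpl dq.
  rewrite pw1. unfold peval, mon, Gu; simpl. field. auto.
Qed.
Lemma tayR (U u0 a b p q A B C D e : R) :
  U = u0 + a * p + b * q + / 2 * (a ^ 2 * A + a * b * (B + C) + b ^ 2 * D) ->
  Rabs a <= e -> Rabs b <= e ->
  Rabs (U - (u0 + a * p + b * q)) <= e ^ 2 / 2 * (Rabs A + Rabs B + Rabs C + Rabs D).
Proof.
  intros -> Ha Hb.
  replace (u0 + a * p + b * q + / 2 * (a ^ 2 * A + a * b * (B + C) + b ^ 2 * D) -
     (u0 + a * p + b * q)) with (/2 * (a ^ 2 * A + a * b * B + a * b * C + b ^ 2 * D)) by ring.
  assert (He : 0 <= e) by (eapply Rle_trans; [apply Rabs_pos|exact Ha]).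
  assert (Ha2 : Rabs (a^2) <= e^2).
  { rewrite <- RPow_abs. apply pow_incr. split; [apply Rabs_pos| exact Ha]. }
  assert (Hb2 : Rabs (b^2) <= e^2).
  { rewrite <- RPow_abs. apply pow_incr. split; [apply Rabs_pos| exact Hb]. }
  assert (Hab : Rabs (a*b) <= e^2).
  { rewrite Rabs_mult. simpl. rewrite Rmult_1_r.
    apply Rmult_le_compat; auto using Rabs_pos. }
  rewrite Rabs_mult. rewrite Rabs_right by lra.
  assert (T : Rabs (a ^ 2 * A + a * b * B + a * b * C + b ^ 2 * D) <=
     Rabs (a^2) * Rabs A + Rabs (a*b) * Rabs B + Rabs (a*b) * Rabs C + Rabs (b^2) * Rabs D).
  { rewrite <- !Rabs_mult.
    pose proof (Rabs_triang (a ^ 2 * A + a * b * B + a * b * C) (b^2*D)).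
    pose proof (Rabs_triang (a ^ 2 * A + a * b * B) (a * b * C)).
    pose proof (Rabs_triang (a ^ 2 * A) (a * b * B)). lra. }
  assert (Rabs (a^2) * Rabs A <= e^2 * Rabs A) by (apply Rmult_le_compat_r; auto using Rabs_pos).
  assert (Rabs (a*b) * Rabs B <= e^2 * Rabs B) by (apply Rmult_le_compat_r; auto using Rabs_pos).
  assert (Rabs (a*b) * Rabs C <= e^2 * Rabs C) by (apply Rmult_le_compat_r; auto using Rabs_pos).
  assert (Rabs (b^2) * Rabs D <= e^2 * Rabs D) by (apply Rmult_le_compat_r; auto using Rabs_pos).
  lra.
Qed.

Lemma fin_v eps u0 p q U11 U01 U10 S11 S01 S00 S10 :
  0 < eps < 1 -> 0 < u0 -> 0 <= S00 ->
  Rabs (U11 - (u0 + 1 * eps * p + 1 * eps * q)) <= eps ^ 2 / 2 * S11 ->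
  Rabs (U01 - (u0 + 0 * eps * p + 1 * eps * q)) <= eps ^ 2 / 2 * S01 ->
  Rabs (U10 - (u0 + 1 * eps * p + 0 * eps * q)) <= eps ^ 2 / 2 * S10 ->
  Rabs ((eps * U11 * peval (dh Dv) [eps * U01; eps * u0; eps * U10]
         - peval (dk Dv) [eps * U01; eps * u0; eps * U10]
         - eps * induced_P Dv eps u0 p q) /
        (powerRZ eps (1 + 1) * peval (dh Dv) [eps * U01; eps * u0; eps * U10]))
  <= 1 * (S11 + (S01 + (S00 + (S10 + 0)))).
Proof.
  intros He Hu HS0 H11 H01 H10.
  rewrite indP_v by lra.
  assert (S11 >= 0 /\ S01 >= 0 /\ S10 >= 0) as [? [? ?]].
  { pose proof (Rabs_pos (U11 - (u0 + 1 * eps * p + 1 * eps * q))).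
    pose proof (Rabs_pos (U01 - (u0 + 0 * eps * p + 1 * eps * q))).
    pose proof (Rabs_pos (U10 - (u0 + 1 * eps * p + 0 * eps * q))).
    assert (0 < eps^2/2) by (simpl; nra). repeat split; nra. }
  set (R11 := U11 - (u0 + 1 * eps * p + 1 * eps * q)) in *.
  set (R01 := U01 - (u0 + 0 * eps * p + 1 * eps * q)) in *.
  set (R10 := U10 - (u0 + 1 * eps * p + 0 * eps * q)) in *.
  replace U11 with (u0 + 1 * eps * p + 1 * eps * q + R11) by (unfold R11; ring).
  replace U01 with (u0 + 0 * eps * p + 1 * eps * q + R01) by (unfold R01; ring).
  replace U10 with (u0 + 1 * eps * p + 0 * eps * q + R10) by (unfold R10; ring).
  clearbody R11 R01 R10.
  set (h := 1 + eps * u0 / 2).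
  assert (Hh : 1 <= h) by (unfold h; nra).
  replace ((eps * (u0 + 1 * eps * p + 1 * eps * q + R11) *
   peval (dh Dv) [eps * (u0 + 0 * eps * p + 1 * eps * q + R01); eps * u0;
     eps * (u0 + 1 * eps * p + 0 * eps * q + R10)] -
   peval (dk Dv) [eps * (u0 + 0 * eps * p + 1 * eps * q + R01); eps * u0;
     eps * (u0 + 1 * eps * p + 0 * eps * q + R10)] - eps * (eps * Gv eps u0 p q)) /
  (powerRZ eps (1 + 1) *
   peval (dh Dv) [eps * (u0 + 0 * eps * p + 1 * eps * q + R01); eps * u0;
     eps * (u0 + 1 * eps * p + 0 * eps * q + R10)]))
   with ((R11 * h - R10 - eps * u0 / 2 * R01) / (eps * h)).
  2:{ unfold peval, mon, Gv, h. simpl. field. split; nra. }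
  unfold Rdiv at 1. rewrite Rabs_mult, Rabs_inv, (Rabs_right (eps*h)) by nra.
  apply (Rmult_le_reg_r (eps * h)); [nra|].
  rewrite Rmult_assoc, Rinv_l, Rmult_1_r by nra.
  pose proof (Rabs_triang (R11 * h - R10) (- (eps * u0 / 2 * R01))).
  pose proof (Rabs_triang (R11 * h) (- R10)).
  unfold Rminus in *. rewrite !Rabs_Ropp in *.
  rewrite !Rabs_mult in *. rewrite (Rabs_right h) in * by lra.
  rewrite (Rabs_right (eps * u0 / 2)) in * by nra.
  assert (Rabs R11 * h <= eps ^ 2 / 2 * S11 * h) by (apply Rmult_le_compat_r; lra).
  assert (eps * u0 / 2 * Rabs R01 <= eps * u0 / 2 * (eps ^ 2 / 2 * S01))
    by (apply Rmult_le_compat_l; nra).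
  assert (Ee : eps ^ 2 / 2 <= eps) by (simpl; nra).
  assert (eps ^ 2 / 2 * S11 * h <= eps * h * S11).
  { replace (eps * h * S11) with (eps * (S11 * h)) by ring. rewrite Rmult_assoc.
    apply Rmult_le_compat_r; nra. }
  assert (eps ^ 2 / 2 * S10 <= eps * h * S10).
  { apply Rmult_le_compat_r; [lra|]. nra. }
  assert (eps * u0 / 2 * (eps ^ 2 / 2 * S01) <= eps * h * S01).
  { assert (eps * u0 / 2 <= h) by (unfold h; lra).
    assert (eps ^ 2 / 2 <= eps) by (simpl; nra).
    assert (0 <= eps * u0 / 2) by nra.
    replace (eps * h * S01) with (h * (eps * S01)) by ring.
    apply Rmult_le_compat; nra. }
  assert (0 <= eps * h * S00) by (apply Rmult_le_pos; nra).
  nra.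
Qed.

Lemma PDE_v : PDE2inf_data Dv Gv.
Proof.
  split; [|split].
  - intros z Hl Hp. unfold nargs in Hl. rewrite stencil_Dv in Hl.
    destruct z as [|a [|b [|c [|]]]]; simpl in Hl; try discriminate.
    inversion Hp as [|? ? Ha Hp1]; inversion Hp1 as [|? ? Hb Hp2].
    unfold peval, mon; simpl. lra.
  - exists (fun eps => eps). intros eps He. split; [lra|].
    intros. apply indP_v. lra.
  - exists 1. split; [lra|].
    intros eps He u ux us uxx uxs usx uss _ Hpos x s th Hth.
    assert (I11 : In (1,1)%Z ((1, 1)%Z :: stencil Dv)) by (simpl; auto).
    assert (I01 : In (0,1)%Z ((1, 1)%Z :: stencil Dv)) by (simpl; auto).
    assert (I00 : In (0,0)%Z ((1, 1)%Z :: stencil Dv)) by (simpl; auto).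
    assert (I10 : In (1,0)%Z ((1, 1)%Z :: stencil Dv)) by (simpl; auto 6).
    destruct (Hth _ I11) as [_ E11]. destruct (Hth _ I01) as [_ E01].
    destruct (Hth _ I00) as [_ E00]. destruct (Hth _ I10) as [_ E10].
    cbv zeta in E11, E01, E00, E10.
    unfold F1, sum2. rewrite stencil_Dv. cbn [map fold_right].
    unfold shx, shs in *. cbn [fst snd dp dq dm] in *. rewrite !pw1 in *.
    assert (E0 : u (x + 0 * eps) (s + 0 * eps) = u x s) by (rewrite E00; ring).
    rewrite E0.
    assert (Ae : Rabs (1 * eps) <= eps) by (rewrite Rmult_1_l, Rabs_right; lra).
    assert (A0 : Rabs (0 * eps) <= eps) by (rewrite Rmult_0_l, Rabs_R0; lra).
    apply fin_v.
    + exact He.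
    + apply Hpos.
    + repeat apply Rplus_le_le_0_compat; apply Rabs_pos.
    + eapply tayR; eauto.
    + eapply tayR; eauto.
    + eapply tayR; eauto.
Qed.

Lemma fin_u eps u0 p q U11 U01 U10 S11 S01 S00 S10 :
  0 < eps < 1 -> 0 < u0 -> 0 <= S00 -> 0 <= S01 ->
  Rabs (U11 - (u0 + 1 * eps * p + 1 * eps * q)) <= eps ^ 2 / 2 * S11 ->
  Rabs (U10 - (u0 + 1 * eps * p + 0 * eps * q)) <= eps ^ 2 / 2 * S10 ->
  Rabs ((eps * U11 * peval (dh Du) [eps * U01; eps * u0; eps * U10]
         - peval (dk Du) [eps * U01; eps * u0; eps * U10]
         - eps * induced_P Du eps u0 p q) /
        (powerRZ eps (1 + 1) * peval (dh Du) [eps * U01; eps * u0; eps * U10]))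
  <= 1 * (S11 + (S01 + (S00 + (S10 + 0)))).
Proof.
  intros He Hu HS0 HS1 H11 H10.
  rewrite indP_u by lra.
  assert (S11 >= 0 /\ S10 >= 0) as [? ?].
  { pose proof (Rabs_pos (U11 - (u0 + 1 * eps * p + 1 * eps * q))).
    pose proof (Rabs_pos (U10 - (u0 + 1 * eps * p + 0 * eps * q))).
    assert (0 < eps^2/2) by (simpl; nra). repeat split; nra. }
  set (R11 := U11 - (u0 + 1 * eps * p + 1 * eps * q)) in *.
  set (R10 := U10 - (u0 + 1 * eps * p + 0 * eps * q)) in *.
  replace U11 with (u0 + 1 * eps * p + 1 * eps * q + R11) by (unfold R11; ring).
  replace U10 with (u0 + 1 * eps * p + 0 * eps * q + R10) by (unfold R10; ring).
  clearbody R11 R10.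
  set (h := 2 + eps * u0 / 2).
  assert (Hh : 2 <= h) by (unfold h; nra).
  replace ((eps * (u0 + 1 * eps * p + 1 * eps * q + R11) *
   peval (dh Du) [eps * U01; eps * u0;
     eps * (u0 + 1 * eps * p + 0 * eps * q + R10)] -
   peval (dk Du) [eps * U01; eps * u0;
     eps * (u0 + 1 * eps * p + 0 * eps * q + R10)] - eps * (eps * Gu eps u0 p q)) /
  (powerRZ eps (1 + 1) *
   peval (dh Du) [eps * U01; eps * u0;
     eps * (u0 + 1 * eps * p + 0 * eps * q + R10)]))
   with ((R11 * h - 2 * R10) / (eps * h)).
  2:{ unfold peval, mon, Gu, h. simpl. field. split; nra. }
  unfold Rdiv at 1. rewrite Rabs_mult, Rabs_inv, (Rabs_right (eps*h)) by nra.
  apply (Rmult_le_reg_r (eps * h)); [nra|].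
  rewrite Rmult_assoc, Rinv_l, Rmult_1_r by nra.
  pose proof (Rabs_triang (R11 * h) (- (2 * R10))).
  unfold Rminus in *. rewrite !Rabs_Ropp in *.
  rewrite !Rabs_mult in *. rewrite (Rabs_right h) in * by lra.
  rewrite (Rabs_right 2) in * by lra.
  assert (Ee : eps ^ 2 / 2 <= eps) by (simpl; nra).
  assert (Rabs R11 * h <= eps ^ 2 / 2 * S11 * h) by (apply Rmult_le_compat_r; lra).
  assert (eps ^ 2 / 2 * S11 * h <= eps * h * S11).
  { replace (eps * h * S11) with (eps * (S11 * h)) by ring. rewrite Rmult_assoc.
    apply Rmult_le_compat_r; nra. }
  assert (2 * (eps ^ 2 / 2 * S10) <= eps * h * S10).
  { replace (2 * (eps ^ 2 / 2 * S10)) with (eps * (eps * S10)) by (simpl; field).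
    rewrite Rmult_assoc. apply Rmult_le_compat_l; [lra|]. nra. }
  assert (0 <= eps * h * S00) by (apply Rmult_le_pos; nra).
  assert (0 <= eps * h * S01) by (apply Rmult_le_pos; nra).
  nra.
Qed.

Lemma PDE_u : PDE2inf_data Du Gu.
Proof.
  split; [|split].
  - intros z Hl Hp. unfold nargs in Hl. rewrite stencil_Du in Hl.
    destruct z as [|a [|b [|c [|]]]]; simpl in Hl; try discriminate.
    inversion Hp as [|? ? Ha Hp1]; inversion Hp1 as [|? ? Hb Hp2].
    unfold peval, mon; simpl. lra.
  - exists (fun eps => eps). intros eps He. split; [lra|].
    intros. apply indP_u. lra.
  - exists 1. split; [lra|].
    intros eps He u ux us uxx uxs usx uss _ Hpos x s th Hth.
    assert (I11 : In (1,1)%Z ((1, 1)%Z :: stencil Du)) by (simpl; auto).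
    assert (I01 : In (0,1)%Z ((1, 1)%Z :: stencil Du)) by (simpl; auto).
    assert (I00 : In (0,0)%Z ((1, 1)%Z :: stencil Du)) by (simpl; auto).
    assert (I10 : In (1,0)%Z ((1, 1)%Z :: stencil Du)) by (simpl; auto 6).
    destruct (Hth _ I11) as [_ E11]. destruct (Hth _ I01) as [_ E01].
    destruct (Hth _ I00) as [_ E00]. destruct (Hth _ I10) as [_ E10].
    cbv zeta in E11, E01, E00, E10.
    unfold F1, sum2. rewrite stencil_Du. cbn [map fold_right].
    unfold shx, shs in *. cbn [fst snd dp dq dm] in *. rewrite !pw1 in *.
    assert (E0 : u (x + 0 * eps) (s + 0 * eps) = u x s) by (rewrite E00; ring).
    rewrite E0.
    assert (Ae : Rabs (1 * eps) <= eps) by (rewrite Rmult_1_l, Rabs_right; lra).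
    assert (A0 : Rabs (0 * eps) <= eps) by (rewrite Rmult_0_l, Rabs_R0; lra).
    apply fin_u.
    + exact He.
    + apply Hpos.
    + repeat apply Rplus_le_le_0_compat; apply Rabs_pos.
    + repeat apply Rplus_le_le_0_compat; apply Rabs_pos.
    + eapply tayR; eauto.
    + eapply tayR; eauto.
Qed.

Lemma abs_split a d : Rabs a <= d -> - d <= a <= d.
Proof.
  intro H. pose proof (Rle_abs a). pose proof (Rle_abs (-a)). rewrite Rabs_Ropp in *. lra.
Qed.

Lemma supd3 x1 x2 x3 y1 y2 y3 :
  let d := supdist [x1;x2;x3] [y1;y2;y3] in
  - d <= x1 - y1 <= d /\ - d <= x2 - y2 <= d /\ - d <= x3 - y3 <= d.
Proof.
  intro d. unfold d, supdist. simpl.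
  pose proof (Rmax_l (Rabs (x3 - y3)) 0). pose proof (Rmax_r (Rabs (x3 - y3)) 0).
  pose proof (Rmax_l (Rabs (x2 - y2)) (Rmax (Rabs (x3 - y3)) 0)).
  pose proof (Rmax_r (Rabs (x2 - y2)) (Rmax (Rabs (x3 - y3)) 0)).
  pose proof (Rmax_l (Rabs (x1 - y1)) (Rmax (Rabs (x2 - y2)) (Rmax (Rabs (x3 - y3)) 0))).
  pose proof (Rmax_r (Rabs (x1 - y1)) (Rmax (Rabs (x2 - y2)) (Rmax (Rabs (x3 - y3)) 0))).
  split; [|split]; apply abs_split; lra.
Qed.

Lemma R2m1 : Rpower 2 (-1) = / 2.
Proof. replace (-1) with (- (1)) by ring. rewrite Rpower_Ropp, Rpower_1; lra. Qed.

Lemma approx_v : approx_data Dv 20 2 1 2 1.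
Proof.
  exists 2, [(0, [0;0;1]%Z); (-1, [1;1;0]%Z); (-1, [0;2;0]%Z)],
            [(0, [0;0;0]%Z); (-1, [0;1;0]%Z)].
  assert (N3 : nargs Dv = 3%nat) by reflexivity.
  rewrite N3.
  split; [lra|]. split; [discriminate|]. split; [discriminate|].
  split; [repeat constructor|]. split; [repeat constructor|].
  split; [|split; [|split; [|split; [|split]]]].
  - intros z Hl Hp.
    destruct z as [|a [|b [|c [|]]]]; simpl in Hl; try discriminate.
    inversion Hp as [|? ? Ha Hp1]; inversion Hp1 as [|? ? Hb Hp2].
    inversion Hp2 as [|? ? Hc _].
    unfold relsum, peval, mon, lmon; simpl.
    rewrite R2m1, Rpower_O by lra. field. lra.
  - simpl. lra.
  - intros x y Hx Hy.
    destruct x as [|x1 [|x2 [|x3 [|]]]]; simpl in Hx; try discriminate.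
    destruct y as [|y1 [|y2 [|y3 [|]]]]; simpl in Hy; try discriminate.
    pose proof (supd3 x1 x2 x3 y1 y2 y3) as Hd. simpl in Hd.
    revert Hd. generalize (supdist [x1; x2; x3] [y1; y2; y3]). intros d Hd.
    unfold phi, tropmax, dotZ. simpl.
    apply Rabs_le. unfold Rmax. repeat destruct Rle_dec; split; lra.
  - cbv. auto.
  - cbv. auto.
  - cbv. discriminate.
Qed.

Lemma approx_u : approx_data Du 20 2 1 2 1.
Proof.
  exists 2, [(1, [0;0;1]%Z); (-1, [0;2;0]%Z)],
            [(1, [0;0;0]%Z); (-1, [0;1;0]%Z)].
  assert (N3 : nargs Du = 3%nat) by reflexivity.
  rewrite N3.
  split; [lra|]. split; [discriminate|]. split; [discriminate|].
  split; [repeat constructor|]. split; [repeat constructor|].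
  split; [|split; [|split; [|split; [|split]]]].
  - intros z Hl Hp.
    destruct z as [|a [|b [|c [|]]]]; simpl in Hl; try discriminate.
    inversion Hp as [|? ? Ha Hp1]; inversion Hp1 as [|? ? Hb Hp2].
    inversion Hp2 as [|? ? Hc _].
    unfold relsum, peval, mon, lmon; simpl.
    rewrite R2m1, Rpower_1 by lra. field. lra.
  - simpl. lra.
  - intros x y Hx Hy.
    destruct x as [|x1 [|x2 [|x3 [|]]]]; simpl in Hx; try discriminate.
    destruct y as [|y1 [|y2 [|y3 [|]]]]; simpl in Hy; try discriminate.
    pose proof (supd3 x1 x2 x3 y1 y2 y3) as Hd. simpl in Hd.
    revert Hd. generalize (supdist [x1; x2; x3] [y1; y2; y3]). intros d Hd.
    unfold phi, tropmax, dotZ. simpl.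
    apply Rabs_le. unfold Rmax. repeat destruct Rle_dec; split; lra.
  - cbv. auto.
  - cbv. auto.
  - cbv. discriminate.
Qed.

Lemma gap_pos T0 s : match T0 with Some T => s < T | None => True end ->
  0 < match T0 with Some T => T - s | None => 1 end.
Proof. destruct T0; intros; lra. Qed.

Lemma pderx_dlim T0 f g x s : pderx (dom T0) f g -> dom T0 x s ->
  derivable_pt_lim (fun t => f t s) x (g x s).
Proof.
  intros H Hd e He. destruct (H x s Hd e He) as [del [Hdel Hh]].
  destruct Hd as [Hx [Hs HT]].
  assert (P : 0 < Rmin del x) by (apply Rmin_glb_lt; lra).
  exists (mkposreal _ P). intros h hn hl. simpl in hl.
  pose proof (Rmin_l del x). pose proof (Rmin_r del x).
  apply Hh; auto; [lra|].
  split; [|split; auto]. pose proof (Rle_abs (-h)). rewrite Rabs_Ropp in *. lra.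
Qed.

Lemma pders_dlim T0 f g x s : pders (dom T0) f g -> dom T0 x s -> 0 < s ->
  derivable_pt_lim (fun t => f x t) s (g x s).
Proof.
  intros H Hd Hs0 e He. destruct (H x s Hd e He) as [del [Hdel Hh]].
  destruct Hd as [Hx [Hs HT]].
  pose proof (gap_pos T0 s HT) as Hg.
  set (g0 := match T0 with Some T => T - s | None => 1 end) in *.
  assert (P : 0 < Rmin del (Rmin s g0)) by (repeat apply Rmin_glb_lt; lra).
  exists (mkposreal _ P). intros h hn hl. simpl in hl.
  pose proof (Rmin_l del (Rmin s g0)). pose proof (Rmin_r del (Rmin s g0)).
  pose proof (Rmin_l s g0). pose proof (Rmin_r s g0).
  pose proof (Rle_abs h). pose proof (Rle_abs (-h)). rewrite Rabs_Ropp in *.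
  apply Hh; auto; [lra|].
  split; [auto|split; [lra|]]. unfold g0 in *. destruct T0; auto; lra.
Qed.

Lemma tay1 (f f' f'' : R -> R) (a b : R) : a < b ->
  (forall c, a <= c <= b -> derivable_pt_lim f c (f' c)) ->
  (forall c, a <= c <= b -> derivable_pt_lim f' c (f'' c)) ->
  exists c, a <= c <= b /\ Rabs (f b - f a - (b - a) * f' a) <= (b - a) ^ 2 * Rabs (f'' c).
Proof.
  intros Hab H1 H2.
  destruct (MVT_cor2 f f' a b Hab H1) as [c1 [E1 Hc1]].
  destruct (MVT_cor2 f' f'' a c1 (proj1 Hc1)) as [c2 [E2 Hc2]].
  { intros c Hc. apply H2. lra. }
  exists c2. split; [lra|].
  replace (f b - f a - (b - a) * f' a) with ((b - a) * (c1 - a) * f'' c2).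
  2:{ rewrite E1. replace (f' c1) with (f' a + f'' c2 * (c1 - a)) by lra. ring. }
  rewrite !Rabs_mult. rewrite (Rabs_right (b-a)), (Rabs_right (c1 - a)) by lra.
  simpl. rewrite Rmult_1_r. apply Rmult_le_compat_r; [apply Rabs_pos|].
  apply Rmult_le_compat_l; lra.
Qed.

Lemma mvt1 (f f' : R -> R) (a b : R) : a < b ->
  (forall c, a <= c <= b -> derivable_pt_lim f c (f' c)) ->
  exists c, a <= c <= b /\ f b - f a = (b - a) * f' c.
Proof.
  intros Hab H1. destruct (MVT_cor2 f f' a b Hab H1) as [c1 [E1 Hc1]].
  exists c1. split; [lra|]. rewrite E1. ring.
Qed.

Lemma dom_box T0 x0 s0 e x s : 0 < x0 -> 0 < s0 -> dom T0 (x0 + e) (s0 + e) ->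
  x0 <= x <= x0 + e -> s0 <= s <= s0 + e -> dom T0 x s.
Proof.
  intros Hx Hs [_ [_ HT]] Hxx Hss. split; [lra|split; [lra|]].
  destruct T0; auto; lra.
Qed.

Section Rem.
Variables (T0 : option R) (u ux us uxx usx uss : R -> R -> R) (e x0 s0 : R).
Hypotheses (Hu : pderx (dom T0) u ux) (Hus : pders (dom T0) u us)
  (Huxx : pderx (dom T0) ux uxx) (Husx : pderx (dom T0) us usx) (Huss : pders (dom T0) us uss).
Hypotheses (He : 0 < e < 1) (Hx0 : 0 < x0) (Hs0 : 0 < s0) (Hbox : dom T0 (x0 + e) (s0 + e)).
Hypothesis (Hsd : forall x s y r, dom T0 x s -> dom T0 y r ->
   10 * e * Rabs (uxx x s) <= u y r /\ 10 * e * Rabs (usx x s) <= u y r /\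
   10 * e * Rabs (uss x s) <= u y r).

Let inb x s : x0 <= x <= x0 + e -> s0 <= s <= s0 + e -> dom T0 x s :=
  fun H1 H2 => dom_box T0 x0 s0 e x s Hx0 Hs0 Hbox H1 H2.

Lemma sd_bound (F : R) y r : dom T0 y r -> 10 * e * Rabs F <= u y r -> e ^ 2 * Rabs F <= e * u y r / 10.
Proof.
  intros _ H. replace (e ^ 2 * Rabs F) with (e / 10 * (10 * e * Rabs F)) by (simpl; field).
  replace (e * u y r / 10) with (e / 10 * u y r) by field.
  apply Rmult_le_compat_l; lra.
Qed.

Lemma rem10 : Rabs (u (x0 + e) s0 - u x0 s0 - e * ux x0 s0) <= u (x0 + e) s0 / 3.
Proof.
  destruct (tay1 (fun t => u t s0) (fun t => ux t s0) (fun t => uxx t s0) x0 (x0 + e)) as [c [Hc B]].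
  - lra.
  - intros c Hc. apply pderx_dlim with (T0 := T0); auto. apply inb; lra.
  - intros c Hc. apply pderx_dlim with (T0 := T0); auto. apply inb; lra.
  - replace (x0 + e - x0) with e in B by ring. cbv beta in B.
    assert (D1 : dom T0 c s0) by (apply inb; lra).
    assert (D2 : dom T0 (x0 + e) s0) by (apply inb; lra).
    destruct (Hsd _ _ _ _ D1 D2) as [H1 _].
    pose proof (sd_bound _ _ _ D2 H1).
    assert (0 <= u (x0 + e) s0) by (pose proof (Rabs_pos (uxx c s0)); nra).
    assert (e * u (x0 + e) s0 / 10 <= u (x0 + e) s0 / 3) by nra. lra.
Qed.

Lemma rem01 : Rabs (u x0 (s0 + e) - u x0 s0 - e * us x0 s0) <= u x0 (s0 + e) / 3.
Proof.
  destruct (tay1 (fun t => u x0 t) (fun t => us x0 t) (fun t => uss x0 t) s0 (s0 + e)) as [c [Hc B]].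
  - lra.
  - intros c Hc. apply pders_dlim with (T0 := T0); auto; [apply inb; lra|lra].
  - intros c Hc. apply pders_dlim with (T0 := T0); auto; [apply inb; lra|lra].
  - replace (s0 + e - s0) with e in B by ring. cbv beta in B.
    assert (D1 : dom T0 x0 c) by (apply inb; lra).
    assert (D2 : dom T0 x0 (s0 + e)) by (apply inb; lra).
    destruct (Hsd _ _ _ _ D1 D2) as [_ [_ H1]].
    pose proof (sd_bound _ _ _ D2 H1).
    assert (0 <= u x0 (s0 + e)) by (pose proof (Rabs_pos (uss x0 c)); nra).
    assert (e * u x0 (s0 + e) / 10 <= u x0 (s0 + e) / 3) by nra. lra.
Qed.

Lemma rem11 : Rabs (u (x0 + e) (s0 + e) - u x0 s0 - e * ux x0 s0 - e * us x0 s0)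
   <= u (x0 + e) (s0 + e) / 3.
Proof.
  set (x1 := x0 + e).
  destruct (tay1 (fun t => u x1 t) (fun t => us x1 t) (fun t => uss x1 t) s0 (s0 + e)) as [c [Hc B]].
  - lra.
  - intros c Hc. apply pders_dlim with (T0 := T0); auto; [apply inb; unfold x1; lra|lra].
  - intros c Hc. apply pders_dlim with (T0 := T0); auto; [apply inb; unfold x1; lra|lra].
  - destruct (mvt1 (fun t => us t s0) (fun t => usx t s0) x0 x1) as [c' [Hc' B']].
    + unfold x1; lra.
    + intros c2 Hc2. apply pderx_dlim with (T0 := T0); auto. apply inb; unfold x1 in *; lra.
    + destruct (tay1 (fun t => u t s0) (fun t => ux t s0) (fun t => uxx t s0) x0 x1) as [c3 [Hc3 B3]].
      * unfold x1; lra.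
      * intros c2 Hc2. apply pderx_dlim with (T0 := T0); auto. apply inb; unfold x1 in *; lra.
      * intros c2 Hc2. apply pderx_dlim with (T0 := T0); auto. apply inb; unfold x1 in *; lra.
      * cbv beta in B, B', B3.
        replace (s0 + e - s0) with e in B by ring.
        replace (x1 - x0) with e in B', B3 by (unfold x1; ring).
        assert (DP : dom T0 x1 (s0 + e)) by (apply inb; unfold x1; lra).
        assert (D1 : dom T0 x1 c) by (apply inb; unfold x1; lra).
        assert (D2 : dom T0 c' s0) by (apply inb; unfold x1 in *; lra).
        assert (D3 : dom T0 c3 s0) by (apply inb; unfold x1 in *; lra).
        destruct (Hsd _ _ _ _ D1 DP) as [_ [_ H1]].
        destruct (Hsd _ _ _ _ D2 DP) as [_ [H2 _]].
        destruct (Hsd _ _ _ _ D3 DP) as [H3 _].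
        pose proof (sd_bound _ _ _ DP H1). pose proof (sd_bound _ _ _ DP H2).
        pose proof (sd_bound _ _ _ DP H3).
        assert (0 <= u x1 (s0 + e)) by (pose proof (Rabs_pos (uss x1 c)); nra).
        assert (3 * (e * u x1 (s0 + e) / 10) <= u x1 (s0 + e) / 3) by nra.
        replace (u x1 (s0 + e) - u x0 s0 - e * ux x0 s0 - e * us x0 s0) with
          ((u x1 (s0 + e) - u x1 s0 - e * us x1 s0) + e * (us x1 s0 - us x0 s0)
           + (u x1 s0 - u x0 s0 - e * ux x0 s0)) by ring.
        rewrite B'.
        pose proof (Rabs_triang ((u x1 (s0 + e) - u x1 s0 - e * us x1 s0) + e * (e * usx c' s0))
                     (u x1 s0 - u x0 s0 - e * ux x0 s0)).
        pose proof (Rabs_triang (u x1 (s0 + e) - u x1 s0 - e * us x1 s0) (e * (e * usx c' s0))).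
        assert (Rabs (e * (e * usx c' s0)) = e ^ 2 * Rabs (usx c' s0)).
        { rewrite !Rabs_mult, Rabs_right by lra. simpl; ring. }
        lra.
Qed.
End Rem.
Lemma absmul r a k : Rabs r <= a / 3 -> 0 <= k -> - (a * k) / 3 <= r * k <= a * k / 3.
Proof.
  intros H Hk. pose proof (Rle_abs r). pose proof (Rle_abs (-r)). rewrite Rabs_Ropp in *.
  split; nra.
Qed.

Lemma step_v eps a00 a10 a01 a11 p q : 0 < eps < 1 -> 0 < a00 -> 0 < a10 -> 0 < a01 -> 0 < a11 ->
  Gv eps a00 p q = 0 ->
  Rabs (a10 - a00 - eps * p) <= a10 / 3 -> Rabs (a01 - a00 - eps * q) <= a01 / 3 ->
  Rabs (a11 - a00 - eps * p - eps * q) <= a11 / 3 ->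
  (a10 + eps / 2 * a00 * a10 + eps * a00 * a01) / 2 <= a11 * (1 + eps * a00) /\
  a11 * (1 + eps * a00) <= 2 * (a10 + eps / 2 * a00 * a10 + eps * a00 * a01).
Proof.
  intros He H0 H1 H2 H3 HG R10 R01 R11.
  assert (E : a11 * (1 + eps * a00) - (a10 + eps / 2 * a00 * a10 + eps * a00 * a01) =
    (a11 - a00 - eps * p - eps * q) * (1 + eps * a00) - (a10 - a00 - eps * p) * (1 + eps * a00 / 2)
    - (a01 - a00 - eps * q) * (eps * a00) + eps * Gv eps a00 p q).
  { unfold Gv; cbv beta; field. }
  rewrite HG in E.
  pose proof (absmul _ _ (1 + eps * a00) R11 ltac:(nra)).
  pose proof (absmul _ _ (1 + eps * a00 / 2) R10 ltac:(nra)).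
  pose proof (absmul _ _ (eps * a00) R01 ltac:(nra)).
  split; nra.
Qed.

Lemma step_u eps a00 a10 a01 a11 p q : 0 < eps < 1 -> 0 < a00 -> 0 < a10 -> 0 < a01 -> 0 < a11 ->
  Gu eps a00 p q = 0 ->
  Rabs (a10 - a00 - eps * p) <= a10 / 3 -> Rabs (a01 - a00 - eps * q) <= a01 / 3 ->
  Rabs (a11 - a00 - eps * p - eps * q) <= a11 / 3 ->
  (2 * a10 + eps / 2 * a00 * a10 + eps / 2 * a00 * a01) / 2 <= a11 * (2 + eps * a00) /\
  a11 * (2 + eps * a00) <= 2 * (2 * a10 + eps / 2 * a00 * a10 + eps / 2 * a00 * a01).
Proof.
  intros He H0 H1 H2 H3 HG R10 R01 R11.
  assert (E : a11 * (2 + eps * a00) - (2 * a10 + eps / 2 * a00 * a10 + eps / 2 * a00 * a01) =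
    (a11 - a00 - eps * p - eps * q) * (2 + eps * a00) - (a10 - a00 - eps * p) * (2 + eps * a00 / 2)
    - (a01 - a00 - eps * q) * (eps * a00 / 2) + eps * Gu eps a00 p q).
  { unfold Gu; cbv beta; field. }
  rewrite HG in E.
  pose proof (absmul _ _ (2 + eps * a00) R11 ltac:(nra)).
  pose proof (absmul _ _ (2 + eps * a00 / 2) R10 ltac:(nra)).
  pose proof (absmul _ _ (eps * a00 / 2) R01 ltac:(nra)).
  split; nra.
Qed.

Lemma ratio_step eps a00 a10 a01 a11 b00 b10 b01 b11 rho :
  0 < eps -> 0 < a00 -> 0 < a10 -> 0 < a01 -> 0 < a11 ->
  0 < b00 -> 0 < b10 -> 0 < b01 -> 0 < b11 -> 1 <= rho ->
  a00 <= rho * b00 -> b00 <= rho * a00 -> a10 <= rho * b10 -> b10 <= rho * a10 ->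
  a01 <= rho * b01 -> b01 <= rho * a01 ->
  (a10 + eps / 2 * a00 * a10 + eps * a00 * a01) / 2 <= a11 * (1 + eps * a00) /\
  a11 * (1 + eps * a00) <= 2 * (a10 + eps / 2 * a00 * a10 + eps * a00 * a01) ->
  (2 * b10 + eps / 2 * b00 * b10 + eps / 2 * b00 * b01) / 2 <= b11 * (2 + eps * b00) /\
  b11 * (2 + eps * b00) <= 2 * (2 * b10 + eps / 2 * b00 * b10 + eps / 2 * b00 * b01) ->
  a11 <= 16 * rho ^ 3 * b11 /\ b11 <= 16 * rho ^ 3 * a11.
Proof.
  intros He Ha0 Ha1 Ha2 Ha3 Hb0 Hb1 Hb2 Hb3 Hr A0 B0 A1 B1 A2 B2 [SA1 SA2] [SB1 SB2].
  set (r2 := rho * rho).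
  assert (Hr2 : 1 <= r2) by (unfold r2; nra).
  assert (rho <= r2) by (unfold r2; nra).
  assert (a10 <= r2 * b10) by nra.
  assert (b10 <= r2 * a10) by nra.
  assert (a00 * a10 <= r2 * (b00 * b10)).
  { unfold r2. replace (rho * rho * (b00 * b10)) with ((rho * b00) * (rho * b10)) by ring.
    apply Rmult_le_compat; lra. }
  assert (b00 * b10 <= r2 * (a00 * a10)).
  { unfold r2. replace (rho * rho * (a00 * a10)) with ((rho * a00) * (rho * a10)) by ring.
    apply Rmult_le_compat; lra. }
  assert (a00 * a01 <= r2 * (b00 * b01)).
  { unfold r2. replace (rho * rho * (b00 * b01)) with ((rho * b00) * (rho * b01)) by ring.
    apply Rmult_le_compat; lra. }
  assert (b00 * b01 <= r2 * (a00 * a01)).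
  { unfold r2. replace (rho * rho * (a00 * a01)) with ((rho * a00) * (rho * a01)) by ring.
    apply Rmult_le_compat; lra. }
  set (Na := a10 + eps / 2 * a00 * a10 + eps * a00 * a01) in *.
  set (Nb := 2 * b10 + eps / 2 * b00 * b10 + eps / 2 * b00 * b01) in *.
  set (Da := 1 + eps * a00) in *. set (Db := 2 + eps * b00) in *.
  assert (Na <= 2 * r2 * Nb).
  { unfold Na, Nb.
    assert (eps * (a00 * a10) <= eps * (r2 * (b00 * b10))) by (apply Rmult_le_compat_l; lra).
    assert (eps * (a00 * a01) <= eps * (r2 * (b00 * b01))) by (apply Rmult_le_compat_l; lra).
    assert (0 <= r2 * (eps * (b00 * b10))) by (apply Rmult_le_pos; [lra|]; apply Rmult_le_pos; [lra|nra]).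
    assert (0 <= r2 * (eps * (b00 * b01))) by (apply Rmult_le_pos; [lra|]; apply Rmult_le_pos; [lra|nra]).
    assert (0 <= r2 * b10) by nra.
    nra. }
  assert (Nb <= 2 * r2 * Na).
  { unfold Na, Nb.
    assert (eps * (b00 * b10) <= eps * (r2 * (a00 * a10))) by (apply Rmult_le_compat_l; lra).
    assert (eps * (b00 * b01) <= eps * (r2 * (a00 * a01))) by (apply Rmult_le_compat_l; lra).
    assert (0 <= r2 * (eps * (a00 * a10))) by (apply Rmult_le_pos; [lra|]; apply Rmult_le_pos; [lra|nra]).
    assert (0 <= r2 * (eps * (a00 * a01))) by (apply Rmult_le_pos; [lra|]; apply Rmult_le_pos; [lra|nra]).
    assert (0 <= r2 * a10) by nra.
    nra. }
  assert (Db <= 2 * rho * Da).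
  { unfold Da, Db. assert (eps * b00 <= eps * (rho * a00)) by (apply Rmult_le_compat_l; lra). nra. }
  assert (Da <= rho * Db).
  { unfold Da, Db. assert (eps * a00 <= eps * (rho * b00)) by (apply Rmult_le_compat_l; lra). nra. }
  assert (HDa : 0 < Da) by (unfold Da; nra). assert (HDb : 0 < Db) by (unfold Db; nra).
  assert (P1 : 0 < eps * a00 * a10) by (repeat apply Rmult_lt_0_compat; lra).
  assert (P2 : 0 < eps * a00 * a01) by (repeat apply Rmult_lt_0_compat; lra).
  assert (P3 : 0 < eps * b00 * b10) by (repeat apply Rmult_lt_0_compat; lra).
  assert (P4 : 0 < eps * b00 * b01) by (repeat apply Rmult_lt_0_compat; lra).
  assert (HNa : 0 < Na) by (unfold Na; lra). assert (HNb : 0 < Nb) by (unfold Nb; lra).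
  split.
  - (* a11 * Da <= 2 Na <= 4 r2 Nb <= 8 r2 Db b11 <= 16 r2 rho Da b11 *)
    assert (a11 * Da <= 4 * r2 * Nb) by nra.
    assert (4 * r2 * Nb <= 4 * r2 * (2 * (b11 * Db))) by (apply Rmult_le_compat_l; nra).
    assert (8 * r2 * b11 * Db <= 8 * r2 * b11 * (2 * rho * Da)) by (apply Rmult_le_compat_l; nra).
    assert (a11 * Da <= (16 * rho ^ 3 * b11) * Da) by (unfold r2 in *; simpl; nra).
    apply Rmult_le_reg_r with Da; lra.
  - assert (b11 * Db <= 4 * r2 * Na) by nra.
    assert (4 * r2 * Na <= 4 * r2 * (2 * (a11 * Da))) by (apply Rmult_le_compat_l; nra).
    assert (8 * r2 * a11 * Da <= 8 * r2 * a11 * (rho * Db)) by (apply Rmult_le_compat_l; nra).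
    assert (0 <= 8 * r2 * a11 * (rho * Db)) by (apply Rmult_le_pos; nra).
    assert (b11 * Db <= (16 * rho ^ 3 * a11) * Db) by (unfold r2 in *; simpl; nra).
    apply Rmult_le_reg_r with Db; lra.
Qed.

Lemma ratio_ge1 a b : 0 < a -> 0 < b -> 1 <= Rmax (a / b) (b / a).
Proof.
  intros Ha Hb. destruct (Rle_dec a b).
  - eapply Rle_trans; [|apply Rmax_r]. apply (Rmult_le_reg_r a); [lra|].
    unfold Rdiv. rewrite Rmult_assoc, Rinv_l; lra.
  - eapply Rle_trans; [|apply Rmax_l]. apply (Rmult_le_reg_r b); [lra|].
    unfold Rdiv. rewrite Rmult_assoc, Rinv_l; lra.
Qed.

Lemma ratio_le a b Q : 0 < a -> 0 < b -> Rmax (a / b) (b / a) <= Q -> a <= Q * b /\ b <= Q * a.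
Proof.
  intros Ha Hb H. pose proof (Rmax_l (a/b) (b/a)). pose proof (Rmax_r (a/b) (b/a)).
  split.
  - assert (a / b <= Q) by lra. apply (Rmult_le_compat_r b) in H2; [|lra].
    unfold Rdiv in H2. rewrite Rmult_assoc, Rinv_l in H2; lra.
  - assert (b / a <= Q) by lra. apply (Rmult_le_compat_r a) in H2; [|lra].
    unfold Rdiv in H2. rewrite Rmult_assoc, Rinv_l in H2; lra.
Qed.

Lemma ratio_of a b k : 0 < a -> 0 < b -> a <= k * b -> b <= k * a -> Rmax (a / b) (b / a) <= k.
Proof.
  intros Ha Hb H1 H2. apply Rmax_lub.
  - apply (Rmult_le_reg_r b); [lra|]. unfold Rdiv. rewrite Rmult_assoc, Rinv_l; lra.
  - apply (Rmult_le_reg_r a); [lra|]. unfold Rdiv. rewrite Rmult_assoc, Rinv_l; lra.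
Qed.

Lemma K_ge1 y : 0 <= y -> 1 <= Rpower 4 y.
Proof. intro. rewrite <- (Rpower_O 4) by lra. apply Rle_Rpower; lra. Qed.

Lemma Rpower_ge_base b K : 1 <= b -> 1 <= K -> b <= Rpower b K.
Proof. intros. rewrite <- (Rpower_1 b) at 1 by lra. apply Rle_Rpower; lra. Qed.

Lemma Rpower4 b y : 0 < b -> Rpower b (Rpower 4 y) = (Rpower b (Rpower 4 (y - 1))) ^ 4.
Proof.
  intro Hb. replace y with (1 + (y - 1)) at 1 by ring.
  rewrite Rpower_plus, Rpower_1 by lra.
  rewrite <- Rpower_pow by (apply exp_pos).
  rewrite Rpower_mult. f_equal. simpl. ring.
Qed.

Section Core.
Variables (T0 : option R) (eps : R) (u ux us uxx uxs usx uss v vx vs vxx vxs vsx vss : R -> R -> R).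
Hypotheses (HT0 : T0_ok T0) (He : 0 < eps < 1)
  (Cu : C2_on (dom T0) u ux us uxx uxs usx uss) (Cv : C2_on (dom T0) v vx vs vxx vxs vsx vss)
  (Pu : forall x s, dom T0 x s -> 0 < u x s) (Pv : forall x s, dom T0 x s -> 0 < v x s)
  (Su : solves Gv eps (dom T0) u ux us) (Sv : solves Gu eps (dom T0) v vx vs)
  (Hsd : forall x s y r, dom T0 x s -> dom T0 y r ->
        5 * (INR 2 * eps) * max2nd uxx uxs usx uss x s <= u y r /\
        5 * (INR 2 * eps) * max2nd vxx vxs vsx vss x s <= v y r).
Variable R0 : R.
Hypothesis HR0 : forall x s, dom T0 x s -> (s <= INR 2 * eps \/ x <= INR 2 * eps) ->
  ratio u v x s <= R0.

Lemma sd_of (f g w : R -> R -> R) (F1 F2 F3 F4 : R -> R -> R) :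
  (forall x s y r, dom T0 x s -> dom T0 y r -> 5 * (INR 2 * eps) * max2nd F1 F2 F3 F4 x s <= w y r) ->
  forall x s y r, dom T0 x s -> dom T0 y r ->
   10 * eps * Rabs (F1 x s) <= w y r /\ 10 * eps * Rabs (F3 x s) <= w y r /\
   10 * eps * Rabs (F4 x s) <= w y r.
Proof.
  intros H x s y r D1 D2. specialize (H x s y r D1 D2).
  replace (5 * (INR 2 * eps)) with (10 * eps) in H by (simpl; ring).
  unfold max2nd in H.
  pose proof (Rmax_l (Rabs (F1 x s)) (Rabs (F2 x s))).
  pose proof (Rmax_l (Rabs (F3 x s)) (Rabs (F4 x s))).
  pose proof (Rmax_r (Rabs (F3 x s)) (Rabs (F4 x s))).
  pose proof (Rmax_l (Rmax (Rabs (F1 x s)) (Rabs (F2 x s))) (Rmax (Rabs (F3 x s)) (Rabs (F4 x s)))).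
  pose proof (Rmax_r (Rmax (Rabs (F1 x s)) (Rabs (F2 x s))) (Rmax (Rabs (F3 x s)) (Rabs (F4 x s)))).
  repeat split; nra.
Qed.

Lemma R0_ge1 : 1 <= R0.
Proof.
  assert (D : dom T0 eps 0).
  { split; [lra|split; [lra|]]. unfold T0_ok in HT0. destruct T0; auto. }
  apply Rle_trans with (ratio u v eps 0).
  - unfold ratio; apply ratio_ge1; auto.
  - apply HR0; auto. right. simpl. lra.
Qed.

Definition Bnd x s := Rpower (40 * R0) (Rpower 4 ((x + s + 1) / eps)).

Lemma core_n : forall n x s, dom T0 x s -> x + s < INR n * eps -> ratio u v x s <= Bnd x s.
Proof.
  pose proof R0_ge1 as HR1.
  assert (Hb1 : 1 <= 40 * R0) by lra.
  induction n as [|n IH]; intros x s D Hn.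
  - destruct D as [Hx [Hs _]]. simpl in Hn. lra.
  - destruct (Rle_dec s (INR 2 * eps)) as [Hs2|Hs2];
    [|destruct (Rle_dec x (INR 2 * eps)) as [Hx2|Hx2]].
    1,2: (eapply Rle_trans; [apply HR0; auto|];
      eapply Rle_trans; [|apply Rpower_ge_base; [lra|apply K_ge1]]; [lra|];
      destruct D as [Hx [Hs _]]; apply Rmult_le_pos; [lra|]; left; apply Rinv_0_lt_compat; lra).
    replace (INR 2) with 2 in * by (simpl; ring).
    destruct Cu as [Hu1 [Hu2 [Hu3 [_ [Hu5 [Hu6 _]]]]]].
    destruct Cv as [Hv1 [Hv2 [Hv3 [_ [Hv5 [Hv6 _]]]]]].
    assert (SDu := sd_of u ux u uxx uxs usx uss (fun x s y r D1 D2 => proj1 (Hsd x s y r D1 D2))).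
    assert (SDv := sd_of v vx v vxx vxs vsx vss (fun x s y r D1 D2 => proj2 (Hsd x s y r D1 D2))).
    set (x0 := x - eps). set (s0 := s - eps).
    assert (Ex : x = x0 + eps) by (unfold x0; ring).
    assert (Es : s = s0 + eps) by (unfold s0; ring).
    destruct D as [Hx [Hs HTs]].
    assert (Dp : dom T0 (x0 + eps) (s0 + eps)) by (rewrite <- Ex, <- Es; split; auto).
    assert (Hx0 : 0 < x0) by (unfold x0; lra).
    assert (Hs0 : 0 < s0) by (unfold s0; lra).
    assert (D00 : dom T0 x0 s0) by (apply (dom_box T0 x0 s0 eps); auto; lra).
    assert (D10 : dom T0 (x0 + eps) s0) by (apply (dom_box T0 x0 s0 eps); auto; lra).
    assert (D01 : dom T0 x0 (s0 + eps)) by (apply (dom_box T0 x0 s0 eps); auto; lra).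
    rewrite S_INR in Hn.
    set (Q := Rpower (40 * R0) (Rpower 4 ((x + s + 1) / eps - 1))).
    assert (HK1 : 1 <= Rpower 4 ((x + s + 1) / eps - 1)).
    { apply K_ge1. apply (Rmult_le_reg_r eps); [lra|].
      unfold Rminus, Rdiv. rewrite Rmult_plus_distr_r, Rmult_assoc, Rinv_l by lra. lra. }
    assert (HQ : 40 * R0 <= Q) by (apply Rpower_ge_base; lra).
    assert (Bpred : forall x' s', dom T0 x' s' -> x' + s' <= x + s - eps -> Bnd x' s' <= Q).
    { intros x' s' _ Hle. unfold Bnd, Q. apply Rle_Rpower; [lra|]. apply Rle_Rpower; [lra|].
      apply (Rmult_le_reg_r eps); [lra|].
      replace ((x' + s' + 1) / eps * eps) with (x' + s' + 1) by (field; lra).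
      replace (((x + s + 1) / eps - 1) * eps) with (x + s + 1 - eps) by (field; lra). lra. }
    assert (I00 := IH x0 s0 D00 ltac:(unfold x0, s0; lra)).
    assert (I10 := IH (x0 + eps) s0 D10 ltac:(unfold x0, s0; lra)).
    assert (I01 := IH x0 (s0 + eps) D01 ltac:(unfold x0, s0; lra)).
    assert (Q00 := Bpred x0 s0 D00 ltac:(unfold x0, s0; lra)).
    assert (Q10 := Bpred (x0 + eps) s0 D10 ltac:(unfold x0, s0; lra)).
    assert (Q01 := Bpred x0 (s0 + eps) D01 ltac:(unfold x0, s0; lra)).
    unfold ratio in I00, I10, I01.
    destruct (ratio_le _ _ Q (Pu _ _ D00) (Pv _ _ D00) ltac:(lra)) as [A0 B0].
    destruct (ratio_le _ _ Q (Pu _ _ D10) (Pv _ _ D10) ltac:(lra)) as [A1 B1].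
    destruct (ratio_le _ _ Q (Pu _ _ D01) (Pv _ _ D01) ltac:(lra)) as [A2 B2].
    assert (RU10 := rem10 T0 u ux uxx usx uss eps x0 s0 Hu1 Hu3 He Hx0 Hs0 Dp SDu).
    assert (RU01 := rem01 T0 u us uxx usx uss eps x0 s0 Hu2 Hu6 He Hx0 Hs0 Dp SDu).
    assert (RU11 := rem11 T0 u ux us uxx usx uss eps x0 s0 Hu1 Hu2 Hu3 Hu5 Hu6 He Hx0 Hs0 Dp SDu).
    assert (RV10 := rem10 T0 v vx vxx vsx vss eps x0 s0 Hv1 Hv3 He Hx0 Hs0 Dp SDv).
    assert (RV01 := rem01 T0 v vs vxx vsx vss eps x0 s0 Hv2 Hv6 He Hx0 Hs0 Dp SDv).
    assert (RV11 := rem11 T0 v vx vs vxx vsx vss eps x0 s0 Hv1 Hv2 Hv3 Hv5 Hv6 He Hx0 Hs0 Dp SDv).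
    assert (StU := step_v eps _ _ _ _ _ _ He (Pu _ _ D00) (Pu _ _ D10) (Pu _ _ D01) (Pu _ _ Dp)
                     (Su _ _ D00) RU10 RU01 RU11).
    assert (StV := step_u eps _ _ _ _ _ _ He (Pv _ _ D00) (Pv _ _ D10) (Pv _ _ D01) (Pv _ _ Dp)
                     (Sv _ _ D00) RV10 RV01 RV11).
    destruct (ratio_step eps _ _ _ _ _ _ _ _ Q (proj1 He) (Pu _ _ D00) (Pu _ _ D10) (Pu _ _ D01)
      (Pu _ _ Dp) (Pv _ _ D00) (Pv _ _ D10) (Pv _ _ D01) (Pv _ _ Dp) ltac:(lra)
      A0 B0 A1 B1 A2 B2 StU StV) as [F1 F2].
    unfold ratio. rewrite Ex, Es.
    eapply Rle_trans; [apply ratio_of; [apply Pu|apply Pv|exact F1|exact F2]; auto|].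
    unfold Bnd. rewrite <- Ex, <- Es. rewrite Rpower4 by lra. fold Q.
    assert (16 * Q ^ 3 <= Q * Q ^ 3) by (apply Rmult_le_compat_r; [apply pow_le|]; lra).
    simpl in *. lra.
Qed.
End Core.

Lemma ratio_sym u v x s : ratio u v x s = ratio v u x s.
Proof. unfold ratio. apply Rmax_comm. Qed.

Lemma rel_vu : related_inf Gv Gu 40 4 1 2.
Proof.
  exists 5, 2. split; [lra|split; [lra|]].
  intros T0 HT0 eps He u ux us uxx uxs usx uss v vx vs vxx vxs vsx vss
    Cu Cv Pu Pv Su Sv _ _ Hsd R0 HR0 x s D.
  assert (HR1 : 1 <= R0) by (eapply (R0_ge1 T0 eps u ux us uxx uxs usx uss v vx vs vxx vxs vsx vss); eauto).
  rewrite pow_1, Rpower_mult_distr by lra.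
  destruct (INR_archimed eps (x + s)) as [n Hn]; [lra|].
  eapply core_n; eauto.
Qed.

Lemma rel_uv : related_inf Gu Gv 40 4 1 2.
Proof.
  exists 5, 2. split; [lra|split; [lra|]].
  intros T0 HT0 eps He u ux us uxx uxs usx uss v vx vs vxx vxs vsx vss
    Cu Cv Pu Pv Su Sv _ _ Hsd R0 HR0 x s D.
  assert (Hsd' : forall x s y r, dom T0 x s -> dom T0 y r ->
        5 * (INR 2 * eps) * max2nd vxx vxs vsx vss x s <= v y r /\
        5 * (INR 2 * eps) * max2nd uxx uxs usx uss x s <= u y r).
  { intros; split; apply Hsd; auto. }
  assert (HR0' : forall x s, dom T0 x s -> (s <= INR 2 * eps \/ x <= INR 2 * eps) ->
    ratio v u x s <= R0).
  { intros. rewrite <- ratio_sym. auto. }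
  assert (HR1 : 1 <= R0) by (eapply (R0_ge1 T0 eps v vx vs vxx vxs vsx vss u ux us uxx uxs usx uss); eauto).
  rewrite pow_1, Rpower_mult_distr by lra.
  destruct (INR_archimed eps (x + s)) as [n Hn]; [lra|].
  rewrite ratio_sym.
  eapply (core_n T0 eps v vx vs vxx vxs vsx vss u ux us uxx uxs usx uss); eauto.
Qed.

Theorem proposition3p3 :
  PDE2inf Gv /\ PDE2inf Gu /\
  approximable Gv 20 2 1 2 1 /\ approximable Gu 20 2 1 2 1 /\
  related_inf Gv Gu 40 4 1 2 /\ related_inf Gu Gv 40 4 1 2.
Proof.
  split; [exists Dv; exact PDE_v|].
  split; [exists Du; exact PDE_u|].
  split; [exists Dv; split; [exact PDE_v|exact approx_v]|].
  split; [exists Du; split; [exact PDE_u|exact approx_u]|].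
  split; [exact rel_vu|exact rel_uv].
Qed.
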